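(* Consider the queue rule with budget $B$, winner endowments $w$ and ranking scores $r$. Fix a winner $i$ whose score is unique, i.e. $r_i\ne r_j$ for all $j\ne i$. Suppose winner $i$ is split into subaccounts with endowments $z_1,\dots,z_m>0$, $\sum_{a=1}^mz_a=w_i$, each child keeping the parent's score $r_i$, while all other winners are unchanged. Let $x_i(B)$ be the seizure from $i$ in the unsplit instance, and $\tilde x_a(B)$ the seizure from child $a$ in the split instance. Then \[\sum_{a=1}^m\tilde x_a(B)=x_i(B),\] i.e. the queue rule is Sybil resistant for such splits.
   Context: Winners $j$ have haircutable endowments $w_j>0$ and ranking scores $r_j\in\mathbb{R}$. The (wealth-space) queue rule with budget $B\ge0$ works as follows: - It processes winners in decreasing order of score. - Each processed winner $j$ has $x_j=\min\{w_j,\text{remaining budget}\}$ seized. - The seized amount is then subtracted from the remaining budget, which starts at $B$. - Ties in score may be processed in any order. *)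

(* Defs.v *)
From HB Require Import structures.
From mathcomp Require Import all_boot all_order all_algebra.
Set Implicit Arguments. Unset Strict Implicit. Unset Printing Implicit Defensive.
Import Order.TTheory GRing.Theory Num.Theory.
Local Open Scope ring_scope.

(* A processing order is a sequence [s] listing
   every winner exactly once, in weakly decreasing order of score (ties may be
   broken arbitrarily, i.e. any such [s] is admissible). *)
Definition valid_order (R : realDomainType) (I : finType) (r : I -> R)
    (s : seq I) : bool :=
  perm_eq s (enum I) && sorted (fun a b => r b <= r a) s.

Fixpoint queue_alloc (R : realDomainType) (I : eqType) (s : seq I)
    (w : I -> R) (B : R) : I -> R :=
  match s with
  | [::] => fun _ => 0
  | j :: s' =>
      let xj := Num.min (w j) B in
      fun k => if k == j then xj else queue_alloc s' w (B - xj) k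
  end.

Definition split_index (I : finType) (i : I) (m : nat) : finType :=
  ({j : I | j != i} + 'I_m)%type.

Definition split_w (R : realDomainType) (I : finType) (i : I) (m : nat)
    (w : I -> R) (z : 'I_m -> R) : split_index i m -> R :=
  fun k => match k with inl j => w (val j) | inr a => z a end.

Definition split_r (R : realDomainType) (I : finType) (i : I) (m : nat)
    (r : I -> R) : split_index i m -> R :=
  fun k => match k with inl j => r (val j) | inr _ => r i end.

Arguments split_w {R I} i m w z _.
Arguments split_r {R I} i m r _.

(* Main.v *)
Require Import Defs.
From HB Require Import structures.
From mathcomp Require Import all_boot all_order all_algebra.
From mathcomp Require Import lra.
Import Order.TTheory GRing.Theory Num.Theory.
Local Open Scope ring_scope.

Section Aux.
Variable R : realDomainType.

Fixpoint bud {T : eqType} (w : T -> R) (p : seq T) (B : R) : R :=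
  match p with [::] => B | j :: p' => bud w p' (B - Num.min (w j) B) end.

Lemma qa_cat (T : eqType) (w : T -> R) p q B k :
  queue_alloc (p ++ q) w B k =
  if k \in p then queue_alloc p w B k else queue_alloc q w (bud w p B) k.
Proof.
elim: p B => [|j p IH] B //=.
rewrite in_cons; case: (k == j) => //=.
Qed.

Lemma bud_eq (T : eqType) (w : T -> R) p B :
  0 <= B -> (forall k, 0 <= w k) ->
  bud w p B = Num.max (B - \sum_(k <- p) w k) 0.
Proof.
move=> + w0; elim: p B => [|j p IH] B B0 /=.
  by rewrite big_nil subr0 maxEle; case: ifP => h; lra.
have hs : 0 <= \sum_(k <- p) w k by apply: sumr_ge0.
have wj := w0 j.
rewrite IH; last by rewrite minEle; case: ifP => h; lra.
rewrite big_cons !maxEle minEle.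
by case: (leP (w j) B) => ?; repeat case: leP => ?; lra.
Qed.

Lemma qa_sum (T : eqType) (w : T -> R) p B :
  0 <= B -> (forall k, 0 <= w k) -> uniq p ->
  \sum_(k <- p) queue_alloc p w B k = Num.min (\sum_(k <- p) w k) B.
Proof.
move=> + w0; elim: p B => [|j p IH] B B0 /=.
  by rewrite !big_nil minEle; case: ifP => h; lra.
case/andP=> jp up.
rewrite !big_cons eqxx.
rewrite (@eq_big_seq _ _ _ _ _ _ (queue_alloc p w (B - Num.min (w j) B))); last first.
  by move=> k kp; case: eqP kp jp => // -> ->.
have hs : 0 <= \sum_(k <- p) w k by apply: sumr_ge0.
have wj := w0 j.
rewrite IH //; last by rewrite minEle; case: ifP => h; lra.
rewrite !minEle.
by case: (leP (w j) B) => ?; repeat case: leP => ?; lra.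
Qed.

Lemma split_sorted (T : eqType) (e : rel T) (P : pred T) s :
  transitive e -> (forall a b, e a b -> P b -> P a) -> sorted e s ->
  s = filter P s ++ filter (predC P) s.
Proof.
move=> tr up; elim: s => //= x s IH srt.
have ss := path_sorted srt.
case: (boolP (P x)) => Px /=; first by rewrite -IH.
have al := order_path_min tr srt.
have -> : filter P s = [::].
  apply/eqP/negbNE; rewrite -has_filter; apply/hasPn => k ks /=.
  apply/negP => Pk; move/allP: al => /(_ k ks) exk.
  by move: Px; rewrite (up _ _ exk Pk).
have -> : filter (predC P) s = s.
  apply/all_filterP/allP => k ks /=.
  apply/negP => Pk; move/allP: al => /(_ k ks) exk.
  by move: Px; rewrite (up _ _ exk Pk).
by [].
Qed.

Lemma block_sum (T : eqType) (sc : T -> R) (w : T -> R) s B c :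
  0 <= B -> (forall k, 0 <= w k) -> uniq s ->
  sorted (fun a b => sc b <= sc a) s ->
  \sum_(k <- [seq k <- s | sc k == c]) queue_alloc s w B k =
  Num.min (\sum_(k <- [seq k <- s | sc k == c]) w k)
          (Num.max (B - \sum_(k <- [seq k <- s | c < sc k]) w k) 0).
Proof.
move=> B0 w0 us srt.
set e := fun a b => sc b <= sc a.
have tr : transitive e by move=> y x z; rewrite /e => h1 h2; exact: le_trans h2 h1.
have d1 := @split_sorted _ e (fun k => c < sc k) s tr
  (fun a b h1 h2 => lt_le_trans h2 h1) srt.
set pre := filter _ s in d1.
set s2 := filter (predC _) s in d1.
have srt2 : sorted e s2 by exact: sorted_filter.
have d2 := @split_sorted _ e (fun k => c <= sc k) s2 tr
  (fun a b h1 h2 => le_trans h2 h1) srt2.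
have hm : filter (fun k => c <= sc k) s2 = filter (fun k => sc k == c) s.
  rewrite /s2 -filter_predI; apply: eq_filter => k /=.
  by rewrite -leNgt eq_le andbC.
rewrite hm in d2.
set mid := filter (fun k => sc k == c) s in d2 *.
set post := filter _ s2 in d2.
have hs : s = pre ++ (mid ++ post) by rewrite -d2.
rewrite (@eq_big_seq _ _ _ _ _ _ (queue_alloc mid w (bud w pre B))); last first.
  move=> k km; rewrite {1}hs qa_cat ifF; last first.
    move: km; rewrite !mem_filter => /andP [/eqP -> _].
    by rewrite ltxx.
  by rewrite qa_cat km.
rewrite qa_sum //; first by rewrite bud_eq.
  by rewrite bud_eq // le_max lexx orbT.
exact: filter_uniq.
Qed.

Lemma sum_seq_all (T : finType) (s : seq T) (P : pred T) (F : T -> R) :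
  uniq s -> (forall k, k \in s) ->
  \sum_(k <- filter P s) F k = \sum_(k | P k) F k.
Proof.
move=> us alls; rewrite big_filter; apply: perm_big.
apply: uniq_perm => //; first exact: index_enum_uniq.
by move=> k; rewrite mem_index_enum alls.
Qed.

Lemma valid_facts (T : finType) (sc : T -> R) s :
  valid_order sc s -> [/\ uniq s, forall k, k \in s &
     sorted (fun a b => sc b <= sc a) s].
Proof.
case/andP=> pe srt; split => //.
  by rewrite (perm_uniq pe) enum_uniq.
by move=> k; rewrite (perm_mem pe) mem_enum.
Qed.
End Aux.

Theorem mainTheorem5 (R : realFieldType) (I : finType) (w r : I -> R) (B : R)
    (i : I) (m : nat) (z : 'I_m -> R) :
  0 <= B ->
  (forall j, 0 < w j) ->
  (forall j, j != i -> r j != r i) ->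
  (forall a, 0 < z a) ->
  \sum_(a < m) z a = w i ->
  forall (s : seq I) (s' : seq (split_index i m)),
  valid_order r s ->
  valid_order (split_r i m r) s' ->
  \sum_(a < m) queue_alloc s' (split_w i m w z) B (inr a) = queue_alloc s w B i.
Proof.
move=> B0 wpos rdiff zpos zsum s s' vs vs'.
have [us alls srt] := @valid_facts R _ _ _ vs.
have [us' alls' srt'] := @valid_facts R _ _ _ vs'.
set W := split_w i m w z.
set Sr := split_r i m r.
have W0 : forall k : split_index i m, 0 <= W k.
  by move=> [j|a]; rewrite /W /split_w; apply: ltW; [exact: wpos | exact: zpos].
have w0 : forall k, 0 <= w k by move=> k; apply: ltW.
have L1 := @block_sum R _ Sr W s' B (r i) B0 W0 us' srt'.
have L2 := @block_sum R _ r w s B (r i) B0 w0 us srt.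
have pm : perm_eq [seq k <- s | r k == r i] [:: i].
  apply: uniq_perm => //; first exact: filter_uniq.
  move=> k; rewrite mem_filter alls andbT inE.
  case: (eqVneq k i) => [->|ki]; first by rewrite eqxx.
  by rewrite (negbTE (rdiff _ ki)).
rewrite !(perm_big _ pm) !big_seq1 in L2.
rewrite L2.
have pm' : perm_eq [seq k <- s' | Sr k == r i] [seq inr a | a <- enum 'I_m].
  apply: uniq_perm => //; first exact: filter_uniq.
    rewrite map_inj_uniq ?enum_uniq //; by move=> a b [].
  case=> [j|a]; rewrite mem_filter alls' andbT /=.
    rewrite (negbTE (rdiff _ (valP j))).
    by apply/esym/negP => /mapP [].
  by rewrite eqxx; apply/esym/map_f; rewrite mem_enum.
rewrite !(perm_big _ pm') !big_map -!enumT !big_enum /= in L1.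
rewrite -zsum.
rewrite (_ : \sum_(a < m) _ = \sum_(i0 in 'I_m) queue_alloc s' W B (inr i0)); last by apply: eq_bigl.
rewrite L1.
have P1 : \sum_(k <- [seq k <- s' | r i < Sr k]) W k = \sum_(k <- [seq k <- s | r i < r k]) w k.
  rewrite !sum_seq_all // big_sumType /= ltxx big_pred0_eq addr0.
  rewrite -(big_sub_cond (fun j => j != i) (fun j => r i < r j) w).
  apply: eq_bigl => j /=; rewrite unfold_in; case: (eqVneq j i) => [->|] /=; by rewrite ?ltxx.
by rewrite P1; congr (Num.min _ _); apply: eq_bigl.
Qed.
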